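(* Let $\mathbb{K}$ be a field of characteristic zero, let $u,v,t,w\in\mathbb{K}$ with $wt\neq0$, let $a_1,\dots,a_\ell\in\mathbb{K}$, and let $\alpha_1\le\dots\le\alpha_\ell$, $\beta_1,\dots,\beta_\ell$, $\gamma_1,\dots,\gamma_\ell$ be nonnegative integers. Let \[P=\sum_{j=1}^\ell a_jX^{\alpha_j}(vX+t)^{\beta_j}(uX+w)^{\gamma_j}.\] If $P\neq0$, then $\operatorname{val}(P)\le\max_{1\le j\le\ell}\left(\alpha_j+2\binom{\ell+1-j}{2}\right)$.
   Context: For a nonzero polynomial $P$, $\operatorname{val}(P)$ is the largest integer $v$ such that $X^v$ divides $P$. *)

(* Defs.v *)
From HB Require Import structures.
From mathcomp Require Import all_boot all_order all_algebra.
Set Implicit Arguments. Unset Strict Implicit. Unset Printing Implicit Defensive.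
Import Order.TTheory GRing.Theory Num.Theory.
Local Open Scope ring_scope.

(* val P : the largest v such that X^v divides P (meaningful for P != 0;
   any v with X^v %| P, P != 0, satisfies v < size P). *)
Definition valp (K : fieldType) (P : {poly K}) : nat :=
  (\max_(v < size P | (('X^v : {poly K}) %| P)%R) v)%N.

(* Main.v *)
Require Import Defs.
From HB Require Import structures.
From mathcomp Require Import all_boot all_order all_algebra.
From mathcomp Require Import ring perm.
Import Order.TTheory GRing.Theory Num.Theory.
Local Open Scope ring_scope.
Set Implicit Arguments. Unset Strict Implicit. Unset Printing Implicit Defensive.
Lemma dvdXnP (K : fieldType) (p : {poly K}) n :
  reflect (forall i, (i < n)%N -> p`_i = 0) ('X^n %| p).
Proof.
apply: (iffP idP).
- by case/dvdpP => q -> i lt_in; rewrite coefMXn lt_in.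
- move=> H; apply/dvdpP; exists (drop_poly n p).
  rewrite -{1}(poly_take_drop n p).
  suff -> : take_poly n p = 0 by rewrite add0r.
  by apply/polyP => i; rewrite coef_take_poly coef0; case: ifP => // /H.
Qed.

Lemma dvdX_derivn (K : fieldType) (p : {poly K}) n k :
  'X^n %| p -> 'X^n %| p^`(k) * 'X^k.
Proof.
move=> /dvdXnP H; apply/dvdXnP => i lt_in.
rewrite coefMXn; case: ltnP => // le_ki.
by rewrite coef_derivn subnKC // H // mul0rn.
Qed.

Lemma mulXpred (R : comPzRingType) (x : R) n : x * x ^+ n.-1 *+ n = x ^+ n *+ n.
Proof. by case: n => //= n; rewrite exprS. Qed.

Definition Ap (K : fieldType) (v t : K) : {poly K} := v%:P * 'X + t%:P.
Definition Yp (K : fieldType) (u v t w : K) : {poly K} := 'X * (Ap v t * Ap u w).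
Definition fp (K : fieldType) (u v t w : K) al be ga : {poly K} :=
  'X^al * Ap v t ^+ be * Ap u w ^+ ga.
Definition Qp (K : fieldType) (u v t w : K) al be ga : {poly K} :=
  (Ap v t * Ap u w) *+ al + (v%:P * 'X * Ap u w) *+ be + (u%:P * 'X * Ap v t) *+ ga.

Lemma derivAp (K : fieldType) (v t : K) : (Ap v t)^`() = v%:P.
Proof. by rewrite /Ap derivD derivC deriv_mulC derivX mulr1 addr0. Qed.

Lemma aux_ring (R : comPzRingType) (X A B xa xa1 a a1 b b1 v u : R) (al be ga : nat) :
  X * xa1 *+ al = xa *+ al -> A * a1 *+ be = a *+ be -> B * b1 *+ ga = b *+ ga ->
  X * (A * B) * ((xa1 *+ al * a + xa * (v * a1 *+ be)) * b + xa * a * (u * b1 *+ ga))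
  = xa * a * b * (A * B *+ al + v * X * B *+ be + u * X * A *+ ga).
Proof.
move=> e1 e2 e3.
transitivity ((X * xa1 *+ al) * A * B * a * b + xa * v * X * (A * a1 *+ be) * B * b
   + xa * u * X * a * A * (B * b1 *+ ga)); first by ring.
rewrite e1 e2 e3; ring.
Qed.

Lemma Y_derivf (K : fieldType) (u v t w : K) al be ga :
  Yp u v t w * (fp u v t w al be ga)^`() = fp u v t w al be ga * Qp u v t w al be ga.
Proof.
rewrite /fp /Yp /Qp !derivM !deriv_exp derivX !derivAp mul1r.
apply: aux_ring; exact: mulXpred.
Qed.
Lemma aux_ring2 (R : comPzRingType) (fk1 Yk fk Y' Yk1 f' R0 R' f Q Y : R) (k : nat) :
  fk1 * Yk + fk * (Y' * Yk1 *+ k) = f' * R0 + f * R' ->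
  Y * f' = f * Q -> Y * Yk1 *+ k = Yk *+ k -> fk * Yk = f * R0 ->
  fk1 * (Yk * Y) = f * (Q * R0 + Y * R' - Y' * R0 *+ k).
Proof.
move=> D hf e hk.
have -> : fk1 * (Yk * Y) = (f' * R0 + f * R' - fk * (Y' * Yk1 *+ k)) * Y.
  by rewrite -D; ring.
transitivity ((Y * f') * R0 + f * R' * Y - Y' * (fk * (Y * Yk1 *+ k))); first by ring.
rewrite hf e mulrnAr hk; ring.
Qed.

Fixpoint Rp (K : fieldType) (Q Y : {poly K}) (k : nat) : {poly K} :=
  match k with
  | 0 => 1
  | k'.+1 => Q * Rp Q Y k' + Y * (Rp Q Y k')^`() - Y^`() * Rp Q Y k' *+ k'
  end.

Lemma derivn_Y (K : fieldType) (f Q Y : {poly K}) :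
  Y * f^`() = f * Q -> forall k, f^`(k) * Y ^+ k = f * Rp Q Y k.
Proof.
move=> hf; elim=> [|k IH]; first by rewrite derivn0 expr0 /= !mulr1.
have D := congr1 deriv IH.
rewrite !derivM deriv_exp -derivnS in D.
rewrite exprSr /=; apply: aux_ring2 D hf _ IH.
exact: mulXpred.
Qed.

Lemma size_mulle (K : fieldType) (p q : {poly K}) m n :
  (size p <= m.+1)%N -> (size q <= n.+1)%N -> (size (p * q)%R <= (m + n).+1)%N.
Proof.
move=> hp hq; apply: leq_trans (size_polyMleq _ _) _.
rewrite -subn1 leq_subLR add1n -addSn -addnS; exact: leq_add.
Qed.

Lemma size_Mnle (K : fieldType) (p : {poly K}) n : (size (p *+ n)%R <= size p)%N.
Proof.
apply/leq_sizeP => j hj; rewrite coefMn.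
by rewrite (leq_sizeP _ _ (leqnn _)) // mul0rn.
Qed.

Lemma size_Dle (K : fieldType) (p q : {poly K}) n :
  (size p <= n)%N -> (size q <= n)%N -> (size (p + q)%R <= n)%N.
Proof. by move=> hp hq; apply: leq_trans (size_polyD _ _) _; rewrite geq_max hp hq. Qed.

Lemma size_Ble (K : fieldType) (p q : {poly K}) n :
  (size p <= n)%N -> (size q <= n)%N -> (size (p - q)%R <= n)%N.
Proof. by move=> hp hq; apply: size_Dle; rewrite ?size_polyN. Qed.

Lemma size_derivle (K : fieldType) (p : {poly K}) n :
  (size p <= n.+1)%N -> (size p^`() <= n)%N.
Proof.
move=> hp; rewrite /deriv; apply: leq_trans (size_poly _ _) _.
by case: (size p) hp.
Qed.

Lemma size_Rp (K : fieldType) (Q Y : {poly K}) :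
  (size Q <= 3)%N -> (size Y <= 4)%N -> forall k, (size (Rp Q Y k) <= (2 * k).+1)%N.
Proof.
move=> hQ hY; have hY' : (size Y^`() <= 3)%N by apply: size_derivle.
elim=> [|k IH] /=; first by rewrite size_poly1.
have e : (2 * k.+1 = 2 + 2 * k)%N by rewrite mulnS.
apply: size_Ble; last first.
  apply: leq_trans (size_Mnle _ _) _; rewrite e; exact: size_mulle.
apply: size_Dle; first by rewrite e; exact: size_mulle.
clear e; case: k IH => [|k] IH.
  by rewrite /= -polyC1 derivC mulr0 size_poly0.
have e2 : (2 * k.+2 = 3 + (2 * k).+1)%N by rewrite !mulnS addnS.
rewrite e2; apply: size_mulle => //; apply: size_derivle.
by rewrite mulnS in IH.
Qed.
Definition Wm (K : fieldType) (g : nat -> {poly K}) (m : nat) : 'M[{poly K}]_m :=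
  \matrix_(i < m, k < m) (g i)^`(k).
Definition Wr (K : fieldType) (g : nat -> {poly K}) (m : nat) : {poly K} := \det (Wm g m).

Lemma det_rowdvd (K : fieldType) m (A : 'M[{poly K}]_m) (d : 'I_m -> {poly K}) :
  (forall i k, d i %| A i k) -> \prod_i d i %| \det A.
Proof.
move=> H.
have -> : A = diag_mx (\row_i d i) *m \matrix_(i, k) (A i k %/ d i).
  apply/matrixP => i k; rewrite mul_diag_mx !mxE mulrC divpK //.
rewrite det_mulmx det_diag; apply: dvdp_mulr; under [X in _ %| X]eq_bigr do rewrite mxE; exact: dvdpp.
Qed.
Lemma derivn_sum (K : fieldType) m (F : 'I_m -> {poly K}) k :
  (\sum_(i < m) F i)^`(k) = \sum_(i < m) (F i)^`(k).
Proof.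
apply: (big_morph (derivn k) (derivnD k)).
by rewrite derivn_poly0 // size_poly0.
Qed.

Lemma size_prod_le (K : fieldType) (I : finType) (F : I -> {poly K}) (d : I -> nat) :
  (forall i, size (F i) <= (d i).+1)%N -> (size (\prod_i F i)%R <= (\sum_i d i).+1)%N.
Proof.
move=> H; elim/big_rec2: _ => [|i n p _ IH]; first by rewrite size_poly1.
by apply: size_mulle => //; exact: H.
Qed.

Lemma size_sum_le (K : fieldType) (I : finType) (F : I -> {poly K}) n :
  (forall i, size (F i) <= n)%N -> (size (\sum_i F i)%R <= n)%N.
Proof.
move=> H; elim/big_rec: _ => [|i p _ IH]; first by rewrite size_poly0.
exact: size_Dle.
Qed.

Lemma size_det_le (K : fieldType) m (R : 'M[{poly K}]_m) :
  (forall i k : 'I_m, size (R i k) <= (2 * k).+1)%N -> (size (\det R) <= (2 * 'C(m, 2)).+1)%N.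
Proof.
move=> H; apply: size_sum_le => s; move: s => /= s.
have -> : (2 * 'C(m, 2) = \sum_i 2 * s i)%N.
  rewrite -big_distrr /= -bin2_sum big_mkord; congr (_ * _)%N.
  by rewrite (reindex_perm s).
rewrite -signr_odd; case: (odd s); rewrite ?expr1 ?expr0 ?mulN1r ?mul1r ?size_polyN;
  by apply: size_prod_le => i; apply: H.
Qed.
Lemma size_Ap (K : fieldType) (v t : K) : (size (Ap v t) <= 2)%N.
Proof.
apply: size_Dle; last by apply: leq_trans (size_polyC_leq1 _) _.
by apply: (@size_mulle _ _ _ 0 1); rewrite ?size_polyC_leq1 ?size_polyX.
Qed.

Lemma size_Yp (K : fieldType) (u v t w : K) : (size (Yp u v t w) <= 4)%N.
Proof.
apply: (@size_mulle _ _ _ 1 2); first by rewrite size_polyX.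
by apply: (@size_mulle _ _ _ 1 1); apply: size_Ap.
Qed.

Lemma size_Qp (K : fieldType) (u v t w : K) al be ga : (size (Qp u v t w al be ga) <= 3)%N.
Proof.
have h2 : forall c (p : {poly K}), (size p <= 2)%N -> (size (c%:P * 'X * p)%R <= 3)%N.
  move=> c p hp; apply: (@size_mulle _ _ _ 1 1) => //.
  by apply: (@size_mulle _ _ _ 0 1); rewrite ?size_polyC_leq1 ?size_polyX.
apply: size_Dle; first apply: size_Dle.
- by apply: leq_trans (size_Mnle _ _) _; apply: (@size_mulle _ _ _ 1 1); apply: size_Ap.
- by apply: leq_trans (size_Mnle _ _) _; apply: h2; apply: size_Ap.
- by apply: leq_trans (size_Mnle _ _) _; apply: h2; apply: size_Ap.
Qed.

Lemma hornerAp (K : fieldType) (v t : K) : (Ap v t).[0] = t.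
Proof. by rewrite /Ap hornerD hornerMX mulr0 add0r hornerC. Qed.

Lemma Ap_neq0 (K : fieldType) (v t : K) : t != 0 -> Ap v t != 0.
Proof. by move=> ht; apply/eqP => h; move: (hornerAp v t); rewrite h horner0 => /esym/eqP; rewrite (negbTE ht). Qed.
Lemma case2 (K : fieldType) (u v t w : K) (hwt : w * t != 0) (l : nat) (a : nat -> K)
  (al be ga : nat -> nat) (N : nat) :
  a 0%N != 0 -> Wr (fun i => fp u v t w (al i) (be i) (ga i)) l.+1 != 0 ->
  'X^N %| \sum_(i < l.+1) (a i)%:P * fp u v t w (al i) (be i) (ga i) ->
  (N <= al 0%N + 2 * 'C(l.+1, 2))%N.
Proof.
set f := fun i => fp u v t w (al i) (be i) (ga i).
move=> a0 hW hP.
have hw : w != 0 by apply: contraNneq hwt => ->; rewrite mul0r.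
have ht : t != 0 by apply: contraNneq hwt => ->; rewrite mulr0.
set m := l.+1.
set Y := Yp u v t w.
set P := \sum_(i < m) (a i)%:P * f i.
pose M := Wm f m.
pose Yd : 'M[{poly K}]_m := diag_mx (\row_(k < m) Y ^+ k).
pose Am : 'M[{poly K}]_m := \matrix_(i, j) (if i == ord0 then (a j)%:P else (i == j)%:R).
pose Rm : 'M[{poly K}]_m := \matrix_(i, k) Rp (Qp u v t w (al i) (be i) (ga i)) Y k.
have hY : Y != 0.
  by rewrite /Y /Yp !mulf_neq0 ?polyX_eq0 ?Ap_neq0.
have detA : \det Am = (a 0%N)%:P.
  rewrite -det_tr det_trig; last first.
    apply/is_trig_mxP => i j lij; rewrite !mxE.
    have -> : (j == ord0) = false by apply/negbTE; apply: contraTneq lij => ->.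
    by case: eqP => // hji; move: lij; rewrite hji ltnn.
  rewrite (bigD1 ord0) //= big1 => [|i ni0]; first by rewrite !mxE eqxx mulr1.
  by rewrite !mxE (negbTE ni0) eqxx.
have eMY : M *m Yd = diag_mx (\row_(i < m) f i) *m Rm.
  apply/matrixP=> i k; rewrite mul_mx_diag mul_diag_mx !mxE.
  apply: derivn_Y; exact: Y_derivf.
have detMY : \det (M *m Yd) = \prod_(i < m) f i * \det Rm.
  by rewrite eMY det_mulmx det_diag; under eq_bigr do rewrite mxE.
have hR : \det Rm != 0.
  apply: contra_neq hW => hR0.
  have : \det (M *m Yd) = 0 by rewrite detMY hR0 mulr0.
  rewrite det_mulmx det_diag => /eqP; rewrite mulf_eq0 => /orP[/eqP // | ].
  rewrite prodf_seq_eq0 => /hasP [k _]; rewrite mxE expf_eq0 (negbTE hY) andbF //.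
have eP : forall k : 'I_m, (Am *m M) ord0 k = P^`(k).
  move=> k; rewrite !mxE /P derivn_sum; apply: eq_bigr => j _.
  by rewrite !mxE eqxx !mul_polyC derivnZ.
have eO : forall (i k : 'I_m), i != ord0 -> (Am *m M) i k = (f i)^`(k).
  move=> i k ni0; rewrite !mxE (bigD1 i) //= big1 => [|j nji].
    by rewrite !mxE (negbTE ni0) eqxx mul1r addr0.
  by rewrite !mxE (negbTE ni0) eq_sym (negbTE nji) mul0r.
have lower : 'X^N * \prod_(i < m | i != ord0) 'X^(al i) %| \det (Am *m M *m Yd).
  pose d := fun i : 'I_m => if i == ord0 then 'X^N else 'X^(al i) : {poly K}.
  have -> : 'X^N * \prod_(i < m | i != ord0) 'X^(al i) = \prod_i d i.
    rewrite [RHS](bigD1 ord0) //= /d /=; congr (_ * _); apply: eq_bigr => i ni0.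
    by rewrite (negbTE ni0).
  apply: det_rowdvd => i k; rewrite mul_mx_diag mxE /d.
  case: eqP => [-> | /eqP ni0].
    rewrite eP mxE /Y /Yp exprMn mulrA; apply: dvdp_mulr; exact: dvdX_derivn.
  rewrite eO // mxE (derivn_Y (Y_derivf u v t w _ _ _)) /f /fp -!mulrA.
  exact: dvdp_mulIl.
have edet : \det (Am *m M *m Yd) = (a 0%N)%:P * (\prod_(i < m) f i * \det Rm).
  by rewrite -mulmxA det_mulmx detA detMY.
pose Z : {poly K} := \prod_(i < m | i != ord0) 'X^(al i).
pose U : {poly K} := \prod_(i < m) (Ap v t ^+ be i * Ap u w ^+ ga i).
have ef : \prod_(i < m) f i = Z * ('X^(al 0%N) * U).
  rewrite /f /fp /U (eq_bigr (fun i : 'I_m => 'X^(al i) * (Ap v t ^+ be i * Ap u w ^+ ga i)));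
    last by move=> i _; rewrite mulrA.
  by rewrite big_split /= (bigD1 ord0) //= -/Z mulrA [Z * _]mulrC.
have hZ : Z != 0 by rewrite prodf_seq_neq0; apply/allP => i _; apply/implyP => _; rewrite expf_neq0 ?polyX_eq0.
move: lower; rewrite -/Z edet ef.
have -> : (a 0%N)%:P * (Z * ('X^(al 0%N) * U) * \det Rm) =
   Z * ('X^(al 0%N) * ((a 0%N)%:P * U * \det Rm)) by ring.
rewrite mulrC dvdp_mul2l //.
set W := (a 0%N)%:P * U * \det Rm => hXW.
case: (leqP N (al 0%N)) => hN; first exact: leq_trans hN (leq_addr _ _).
have eN : 'X^N = 'X^(al 0%N) * 'X^(N - al 0%N) :> {poly K} by rewrite -exprD subnKC // ltnW.
move: hXW; rewrite eN dvdp_mul2l ?expf_neq0 ?polyX_eq0 //.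
have -> : W = \det Rm * ((a 0%N)%:P * U) by rewrite /W; ring.
rewrite Gauss_dvdpl; last first.
  apply: coprimep_expl; rewrite coprimep_sym.
  have := coprimep_XsubC ((a 0%N)%:P * U) 0; rewrite polyC0 subr0 => ->.
  rewrite /root hornerM hornerC horner_prod mulf_neq0 //.
  rewrite prodf_seq_neq0; apply/allP => i _; apply/implyP => _.
  by rewrite hornerM !horner_exp !hornerAp mulf_neq0 // expf_neq0.
move=> /(dvdp_leq hR); rewrite size_polyXn => hs.
have hs2 : (size (\det Rm) <= (2 * 'C(m, 2)).+1)%N.
  by apply: size_det_le => i k; rewrite mxE; apply: size_Rp; rewrite ?size_Qp ?size_Yp.
by rewrite -leq_subLR -ltnS; exact: leq_trans hs hs2.
Qed.
Lemma natmul_neq0 (K : fieldType) (charK : [pchar K] =i pred0) (x : K) n :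
  x != 0 -> n != 0%N -> x *+ n != 0.
Proof.
move=> hx hn; rewrite -mulr_natr mulf_neq0 //.
by move/pcharf0P: charK => ->.
Qed.

Lemma natmul_inj (K : fieldType) (charK : [pchar K] =i pred0) (x : K) a b :
  x != 0 -> x *+ a = x *+ b -> a = b.
Proof.
move=> hx.
wlog lab : a b / (a <= b)%N.
  move=> H e; case: (leqP a b) => h; first exact: H.
  by apply/esym/H => //; apply: ltnW.
move=> e; apply/eqP; rewrite eqn_leq lab /= -subn_eq0.
have eb : b = (a + (b - a))%N by rewrite subnKC.
rewrite [in x *+ b]eb mulrnDr in e.
have h : x *+ (b - a) = 0 by apply: (@addrI _ (x *+ a)); rewrite addr0 -e.
apply/negPn/negP => hn; move: (natmul_neq0 charK hx hn); by rewrite h eqxx.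
Qed.

Lemma deriv_size (K : fieldType) (charK : [pchar K] =i pred0) (p : {poly K}) n :
  size p = n.+2 -> size p^`() = n.+1 /\ lead_coef p^`() = lead_coef p *+ n.+1.
Proof.
move=> hs.
have hl : lead_coef p != 0 by rewrite lead_coef_eq0 -size_poly_eq0 hs.
have e1 : size p^`() = n.+1.
  rewrite /deriv hs /=; apply: size_poly_eq => /=.
  by apply: natmul_neq0 => //; move: hl; rewrite lead_coefE hs.
split=> //; by rewrite lead_coefE e1 /= coef_deriv lead_coefE hs.
Qed.

Lemma wr_size (K : fieldType) (charK : [pchar K] =i pred0) (r q : {poly K}) :
  r != 0 -> q != 0 -> r^`() * q = r * q^`() -> size r = size q.
Proof.
move=> hr hq e.
case hsr: (size r) => [|[|n]]; first by move/eqP: hsr; rewrite size_poly_eq0 (negbTE hr).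
- case hsq: (size q) => [|[|k]] //; first by move/eqP: hsq; rewrite size_poly_eq0 (negbTE hq).
  have [e1 _] := deriv_size charK hsq.
  move: e; rewrite /deriv hsr /= poly_def big_ord0 mul0r => /esym/eqP.
  by rewrite mulf_eq0 (negbTE hr) -size_poly_eq0 e1.
- case hsq: (size q) => [|[|k]] //; first by move/eqP: hsq; rewrite size_poly_eq0 (negbTE hq).
  + have [e1 _] := deriv_size charK hsr.
    move: e; rewrite [q^`()]/deriv hsq /= poly_def big_ord0 mulr0 => /eqP.
    by rewrite mulf_eq0 (negbTE hq) orbF -size_poly_eq0 e1.
  + have [_ l1] := deriv_size charK hsr; have [_ l2] := deriv_size charK hsq.
    have := congr1 lead_coef e; rewrite !lead_coefM l1 l2 mulrnAl mulrnAr.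
    have hl : lead_coef r * lead_coef q != 0.
      by rewrite mulf_neq0 // lead_coef_eq0.
    by move=> /(natmul_inj charK hl) => h; rewrite h.
Qed.

Lemma wronsk2 (K : fieldType) (charK : [pchar K] =i pred0) (p q : {poly K}) :
  q != 0 -> p^`() * q = p * q^`() -> p = (lead_coef p / lead_coef q) *: q.
Proof.
move=> hq e.
have [->|hp] := eqVneq p 0; first by rewrite lead_coef0 mul0r scale0r.
have hs := wr_size charK hp hq e.
set c := lead_coef p / lead_coef q.
set r := p - c *: q.
have hlq : lead_coef q != 0 by rewrite lead_coef_eq0.
have er : r^`() * q = r * q^`().
  by rewrite /r derivB derivZ mulrBl mulrBl e -!scalerAl [q^`() * q]mulrC.
apply/eqP; rewrite -subr_eq0 -/r; apply/negPn/negP => hr.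
have := wr_size charK hr hq er.
have h1 : (size r <= size q)%N by apply: size_Ble; rewrite ?hs ?size_scale_leq.
have h2 : r`_(size q).-1 = 0.
  rewrite /r coefB coefZ -lead_coefE -hs -lead_coefE /c mulrVK ?subrr //.
  by rewrite unitfE.
move=> hsz; move: h2; rewrite -hsz -lead_coefE => /eqP; rewrite lead_coef_eq0.
by rewrite (negbTE hr).
Qed.
Lemma cof_F1 (K : fieldType) (g : nat -> {poly K}) m :
  Wr g m.+1 = 0 -> forall k : 'I_m.+1,
  \sum_(i < m.+1) (g i)^`(k) * cofactor (Wm g m.+1) i ord_max = 0.
Proof.
move=> hW k; set M := Wm g m.+1.
pose M' : 'M[{poly K}]_m.+1 := \matrix_(i, j) M i (if j == ord_max then k else j).
have ec : forall i, cofactor M' i ord_max = cofactor M i ord_max.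
  move=> i; rewrite /cofactor; congr (_ * \det _); apply/matrixP => x y.
  by rewrite !mxE eq_sym (negbTE (neq_lift _ _)).
have := expand_det_col M' ord_max.
under eq_bigr do rewrite ec mxE eqxx.
under [X in _ = X -> _]eq_bigr do rewrite mxE.
move=> <-.
have [ek|nk] := eqVneq k ord_max.
  rewrite -hW /Wr -/M; congr (\det _); apply/matrixP => x y; rewrite mxE.
  by case: eqP => [->|] //; rewrite ek.
rewrite -det_tr; apply: (determinant_alternate nk) => i.
by rewrite !mxE eqxx (negbTE nk).
Qed.
Lemma wr_dep (K : fieldType) (charK : [pchar K] =i pred0) (g : nat -> {poly K}) m :
  Wr g m = 0 -> exists c : nat -> K,
    (exists2 r, (r < m)%N & c r != 0) /\ \sum_(i < m) (c i)%:P * g i = 0.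
Proof.
elim: m => [|m IH] hW.
  by move: hW; rewrite /Wr det_mx00 => /eqP; rewrite oner_eq0.
have [hWm|hWm] := eqVneq (Wr g m) 0.
  have [c [[r hr cr] hs]] := IH hWm.
  exists (fun i => if (i < m)%N then c i else 0); split.
    by exists r; [apply: leqW | rewrite hr].
  rewrite big_ord_recr /= ltnn mul0r addr0 -[RHS]hs; apply: eq_bigr => i _.
  by rewrite /= ltn_ord.
set M := Wm g m.+1.
pose C := fun i : 'I_m.+1 => cofactor M i ord_max.
have F1 : forall k : 'I_m.+1, \sum_(i < m.+1) (g i)^`(k) * C i = 0 := cof_F1 hW.
have F2 : forall k : 'I_m.+1, (k < m)%N -> \sum_(i < m.+1) (g i)^`(k) * (C i)^`() = 0.
  move=> k hk.
  have hk' : (k.+1 < m.+1)%N by [].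
  have h1 := F1 (Ordinal hk'); rewrite /= in h1.
  have := congr1 deriv (F1 k); rewrite deriv0 raddf_sum /=.
  under eq_bigr do rewrite derivM -derivnS.
  by rewrite big_split /= h1 add0r.
pose d := fun i => (C i)^`() * C ord_max - C i * (C ord_max)^`().
have F3 : forall k : 'I_m.+1, (k < m)%N -> \sum_(i < m.+1) (g i)^`(k) * d i = 0.
  move=> k hk; rewrite /d.
  transitivity (C ord_max * \sum_(i < m.+1) (g i)^`(k) * (C i)^`()
                - (C ord_max)^`() * \sum_(i < m.+1) (g i)^`(k) * C i).
    by rewrite !big_distrr -sumrB; apply: eq_bigr => i _ /=; ring.
  by rewrite F2 // F1 !mulr0 subr0.
have hCm : C ord_max = Wr g m.
  rewrite /C /cofactor addnn -signr_odd odd_double expr0 mul1r.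
  congr (\det _); apply/matrixP => i k; rewrite !mxE.
  by rewrite !lift_max.
have hd : forall i, d i = 0.
  have hdm : d ord_max = 0 by rewrite /d mulrC subrr.
  pose dv : 'rV[{poly K}]_m := \row_(i < m) d (widen_ord (leqnSn m) i).
  have hz : dv *m Wm g m = 0.
    apply/matrixP => z k; rewrite !mxE.
    have := F3 (widen_ord (leqnSn m) k) (ltn_ord k).
    rewrite big_ord_recr /= hdm mulr0 addr0 => e; rewrite -[RHS]e.
    by apply: eq_bigr => i _; rewrite !mxE mulrC.
  have hdv : dv = 0.
    have := congr1 (fun A => A *m \adj (Wm g m)) hz.
    rewrite /= -mulmxA mul_mx_adj mul0mx mul_mx_scalar => /matrixP h.
    apply/matrixP => z i; have := h z i; rewrite !mxE => /eqP.
    by rewrite mulf_eq0 (negbTE hWm) => /eqP.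
  move=> i; have [->//|ni] := eqVneq i ord_max.
  have hi : (i < m)%N by rewrite ltn_neqAle -ltnS ltn_ord andbT; apply: contra ni => /eqP h; apply/eqP/val_inj.
  have := congr1 (fun A : 'M[{poly K}]_(1, m) => A 0 (Ordinal hi)) hdv; rewrite !mxE /=.
  by have -> : widen_ord (leqnSn m) (Ordinal hi) = i by apply: val_inj.
have hCm0 : C ord_max != 0 by rewrite hCm.
have hC : forall i, C i = (lead_coef (C i) / lead_coef (C ord_max)) *: C ord_max.
  move=> i; apply: wronsk2 => //; apply/eqP; rewrite -subr_eq0; apply/eqP; exact: hd i.
exists (fun i => lead_coef (C (inord i)) / lead_coef (C ord_max)); split.
  have eim : inord m = ord_max :> 'I_m.+1 by apply: val_inj; rewrite /= inordK.
  by exists m => //; rewrite eim divff ?oner_eq0 // lead_coef_eq0.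
have : (\sum_(i < m.+1) (lead_coef (C (inord i)) / lead_coef (C ord_max))%:P * g i) * C ord_max = 0.
  rewrite mulr_suml -[RHS](F1 ord0); apply: eq_bigr => i _.
  by rewrite derivn0 inord_val [in RHS](hC i) -scalerAr -mul_polyC [RHS]mulrA.
by move/eqP; rewrite mulf_eq0 (negbTE hCm0) orbF => /eqP.
Qed.
Lemma remove_term (K : fieldType) (u v t w : K) l (a : nat -> K) (al be ga : nat -> nat) (r : 'I_l.+1) :
  a r = 0 ->
  \sum_(i < l.+1) (a i)%:P * fp u v t w (al i) (be i) (ga i) =
  \sum_(i < l) (a (bump r i))%:P * fp u v t w (al (bump r i)) (be (bump r i)) (ga (bump r i)).
Proof.
move=> ar; rewrite (bigD1_ord r) //= ar mul0r add0r.
by apply: eq_bigr.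
Qed.

Lemma main_ind (K : fieldType) (charK : [pchar K] =i pred0) (u v t w : K) (hwt : w * t != 0) l :
  forall (a : nat -> K) (al be ga : nat -> nat) N,
  \sum_(i < l) (a i)%:P * fp u v t w (al i) (be i) (ga i) != 0 ->
  'X^N %| \sum_(i < l) (a i)%:P * fp u v t w (al i) (be i) (ga i) ->
  exists2 i, (i < l)%N & (N <= al i + 2 * 'C(l - i, 2))%N.
Proof.
elim: l => [|l IH] a al be ga N hP hN; first by rewrite big_ord0 eqxx in hP.
have rem : forall (a : nat -> K) (r : 'I_l.+1), a r = 0 ->
    \sum_(i < l.+1) (a i)%:P * fp u v t w (al i) (be i) (ga i) != 0 ->
    'X^N %| \sum_(i < l.+1) (a i)%:P * fp u v t w (al i) (be i) (ga i) ->
    exists2 i, (i < l.+1)%N & (N <= al i + 2 * 'C(l.+1 - i, 2))%N.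
  move=> {hP hN} a r ar hP hN; rewrite (remove_term _ _ _ _ _ _ _ ar) in hP hN.
  have [i hi hb] := IH (fun i => a (bump r i)) (fun i => al (bump r i))
    (fun i => be (bump r i)) (fun i => ga (bump r i)) N hP hN.
  exists (bump r i); first by rewrite /bump; case: (r <= i)%N; rewrite /= ?ltnS // ltnW.
  apply: leq_trans hb _; rewrite leq_add2l leq_mul2l /=; apply: leq_bin2l.
  rewrite /bump; case: (r <= i)%N; rewrite /= ?add0n ?add1n ?subSS //.
  by apply: leq_sub2r.
have [hW|hW] := eqVneq (Wr (fun i => fp u v t w (al i) (be i) (ga i)) l.+1) 0.
  have [c [[r hr cr] hc]] := wr_dep charK hW.
  pose a' := fun i => a i - (a r / c r) * c i.
  have e : \sum_(i < l.+1) (a i)%:P * fp u v t w (al i) (be i) (ga i) =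
           \sum_(i < l.+1) (a' i)%:P * fp u v t w (al i) (be i) (ga i).
    transitivity (\sum_(i < l.+1) (a i)%:P * fp u v t w (al i) (be i) (ga i)
       - (a r / c r)%:P * \sum_(i < l.+1) (c i)%:P * fp u v t w (al i) (be i) (ga i)).
      by rewrite hc mulr0 subr0.
    rewrite big_distrr -sumrB; apply: eq_bigr => i _.
    by rewrite /a' polyCB mulrBl; congr (_ - _); rewrite (polyCM (a r / c r) (c i)) -mulrA.
  rewrite e in hP hN.
  apply: (rem a' (Ordinal hr)) => //=.
  by rewrite /a' divfK // subrr.
have [a0|a0] := eqVneq (a 0%N) 0; first exact: (rem a ord0).
exists 0%N => //; rewrite subn0.
exact: (case2 hwt a0 hW hN).
Qed.
Theorem corollary2p7 (K : fieldType) (charK : [pchar K] =i pred0)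
  (u v t w : K) (hwt : w * t != 0) (l : nat) (a : nat -> K)
  (alpha beta gamma : nat -> nat)
  (halpha : forall i j : nat, (i <= j)%N -> (j < l)%N -> (alpha i <= alpha j)%N) :
  let P : {poly K} :=
    \sum_(i < l) (a i)%:P * ('X^(alpha i) * ((v%:P * 'X + t%:P) ^+ beta i)
                                        * ((u%:P * 'X + w%:P) ^+ gamma i)) in
  P != 0 ->
  (valp P <= \max_(i < l) (alpha i + 2 * 'C(l - i, 2)))%N.
Proof.
move=> P hP; rewrite /valp; apply/bigmax_leqP => n hn.
have [i hi hb] := main_ind charK hwt (N := n) hP hn.
apply: leq_trans hb _.
exact: (@leq_bigmax _ (fun j : 'I_l => alpha j + 2 * 'C(l - j, 2))%N (Ordinal hi)).
Qed.
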